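(* Let $X$ and $Y$ be Hausdorff spaces with $X$ locally compact, and let $f:\mathrm{Closed}(X)\to\mathrm{Closed}(Y)$ be admissible. Then $X+_fY$ is Hausdorff if and only if $f(K)=\emptyset$ for every compact $K\subseteq X$ and, for all distinct $a,b\in Y$, there exist $A,B\in\mathrm{Closed}(X)$ with $A\cup B=X$, $b\notin f(A)$ and $a\notin f(B)$.
   Context: $\mathrm{Closed}(X)$ is the set of closed subsets of $X$. $f:\mathrm{Closed}(X)\to\mathrm{Closed}(Y)$ is admissible if $f(\emptyset)=\emptyset$ and $f(A_1\cup A_2)=f(A_1)\cup f(A_2)$. $X+_fY$ is the set $X\sqcup Y$ with the topology whose closed sets are the $D$ with $D\cap X$ closed in $X$, $D\cap Y$ closed in $Y$ and $f(D\cap X)\subseteq D$. *)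

(* Defs.v *)
From HB Require Import structures.
From mathcomp Require Import all_boot all_order.
From mathcomp Require Import all_classical all_reals all_analysis.
Set Implicit Arguments. Unset Strict Implicit. Unset Printing Implicit Defensive.
Local Open Scope classical_set_scope.

Section Glue.
Variables X Y : topologicalType.

(* A map Closed(X) -> Closed(Y) is represented by f : set X -> set Y; only
   its values on closed sets matter.  Admissibility includes that f sends
   closed sets to closed sets. *)
Definition admissible (f : set X -> set Y) : Prop :=
  [/\ (forall A, closed A -> closed (f A)),
      f set0 = set0 &
      (forall A1 A2, closed A1 -> closed A2 -> f (A1 `|` A2) = f A1 `|` f A2)].

Record admissible_map := AdmissibleMap {
  amap :> set X -> set Y;
  amapP : admissible amap }.

Definition glue_closed (f : set X -> set Y) (D : set (X + Y)%type) : Prop :=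
  [/\ closed (inl @^-1` D), closed (inr @^-1` D) &
      f (inl @^-1` D) `<=` inr @^-1` D].

Definition plus_f (f : admissible_map) : Type := (X + Y)%type.

Variable f : admissible_map.

HB.instance Definition _ := Choice.on (plus_f f).

Let op (U : set (plus_f f)) := glue_closed f (~` U).

Let amap_mono (A B : set X) : closed A -> closed B -> A `<=` B -> f A `<=` f B.
Proof.
move=> cA cB AB; have [_ _ fU] := amapP f.
have -> : B = A `|` B by rewrite setUidr.
by rewrite fU //; apply: subsetUl.
Qed.

Let opT : op setT.
Proof.
have [_ f0 _] := amapP f.
rewrite /op /glue_closed setCT !preimage_set0 f0; split => //; exact: closed0.
Qed.

Let opI : setI_closed op.
Proof.
move=> U V [cU1 cU2 fU] [cV1 cV2 fV]; rewrite /op /glue_closed setCI !preimage_setU.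
have [_ _ fD] := amapP f.
split; [exact: closedU|exact: closedU|].
rewrite fD //; move=> y [/fU|/fV]; by [left|right].
Qed.

Let op_bigU (I : Type) (g : I -> set (plus_f f)) : (forall i, op (g i)) ->
  op (\bigcup_i g i).
Proof.
move=> hg; rewrite /op /glue_closed setC_bigcup !preimage_bigcap.
split; [apply: closed_bigI => i _; by case: (hg i)|
        apply: closed_bigI => i _; by case: (hg i)|].
move=> y fy i _; have [c1 c2 fi] := hg i; apply: fi.
apply: (amap_mono _ c1 _ fy); last by move=> x /(_ i Logic.I).
by apply: closed_bigI => j _; case: (hg j).
Qed.

HB.instance Definition _ := isOpenTopological.Build (plus_f f) opT opI op_bigU.

End Glue.

(* Main.v *)
Require Import Defs.
From HB Require Import structures.
From mathcomp Require Import all_boot all_order.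
From mathcomp Require Import all_classical all_reals all_analysis.
Local Open Scope classical_set_scope.

Section Helpers.
Variables X Y : topologicalType.
Variable f : admissible_map X Y.

Lemma h_openE (U : set (plus_f f)) : open U <-> glue_closed f (~` U).
Proof. by []. Qed.

Lemma h_closedE (D : set (plus_f f)) : closed D <-> glue_closed f D.
Proof. by rewrite -openC h_openE setCK. Qed.

Definition glueset (A : set X) (C : set Y) : set (plus_f f) :=
  fun z => match z with inl x => A x | inr y => C y end.

Lemma glueset_closed (A : set X) (C : set Y) :
  closed A -> closed C -> f A `<=` C -> closed (glueset A C).
Proof.
move=> cA cC fAC; apply/h_closedE; split => //.
Qed.

Lemma inl_img_open (U : set X) : open U -> open (inl @` U : set (plus_f f)).
Proof.
move=> oU; apply/h_openE; split.
- set S := (X in closed X).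
  have -> : S = ~` U.
    apply/seteqP; split => x; rewrite /S /=.
    - by move=> h Ux; apply: h; exists x.
    - by move=> nU [x' Ux' [e]]; apply: nU; rewrite -e.
  exact: open_closedC.
- set S := (X in closed X).
  have -> : S = setT.
    by apply/seteqP; split => // y _; rewrite /S /= => -[x _].
  exact: closedT.
- by move=> y _ /= [x _].
Qed.

Lemma inl_cont : continuous (inl : X -> plus_f f).
Proof.
apply/continuousP => U /h_openE [c1 _ _].
by rewrite -closedC; exact: c1.
Qed.

Lemma sepP (T : topologicalType) (p q : T) :
  (exists U V : set T, [/\ open U, open V, U p, V q & U `&` V = set0]) ->
  exists2 AB, (p \in AB.1 /\ q \in AB.2) &
     [/\ open AB.1, open AB.2 & AB.1 `&` AB.2 == set0].
Proof.
move=> [U [V [oU oV Up Vq UV]]]; exists (U, V) => /=.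
  by rewrite !inE.
by split => //; apply/eqP.
Qed.

End Helpers.

Theorem mainTheorem11 (X Y : topologicalType) (f : admissible_map X Y) :
  hausdorff_space X -> hausdorff_space Y -> locally_compact [set: X] ->
  (hausdorff_space (plus_f f) <->
   ((forall K : set X, compact K -> f K = set0) /\
    (forall a b : Y, a <> b ->
       exists A B : set X, [/\ closed A, closed B, A `|` B = setT,
                              ~ f A b & ~ f B a]))).
Proof.
move=> hX hY hlc; have [fcl f0 fU] := amapP f.
split.
- move=> H; split.
  + move=> K cK.
    have clK : closed K by exact: compact_closed.
    have cK' : compact (inl @` K : set (plus_f f)).
      exact: (continuous_compact (continuous_subspaceT (@inl_cont X Y f))).
    have /h_closedE [_ _ sub] := compact_closed H cK'.
    have eK : inl @^-1` (inl @` K : set (plus_f f)) = K.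
      apply/seteqP; split => x /=; last by exists x.
      by move=> [x' Kx' [<-]].
    rewrite eK in sub; apply/seteqP; split => // y /sub [x _] //.
  + move=> a b ab; move: H; rewrite open_hausdorff => H.
    have /H [[U V] /= [aU bV] [oU oV /eqP UV]] : (inr a : plus_f f) != inr b.
      by apply/eqP => -[].
    move: aU bV; rewrite !inE => aU bV.
    have [cV1 _ sV] := (@h_openE _ _ f V).1 oV.
    have [cU1 _ sU] := (@h_openE _ _ f U).1 oU.
    exists (inl @^-1` (~` V)), (inl @^-1` (~` U)); split => //.
    * apply/seteqP; split => // x _ /=.
      have [Vx|nVx] := pselect (V (inl x)); last by left.
      right => Ux.
      by have : (U `&` V) (inl x) by []; rewrite UV.
    * by move=> /sV.
    * by move=> /sU.
- move=> [hK hS]; rewrite open_hausdorff => p q pq.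
  apply: sepP.
  have mixed : forall (x : X) (y : Y), exists U V : set (plus_f f),
      [/\ open U, open V, U (inl x), V (inr y) & U `&` V = set0].
    move=> x y.
    have [W] := hlc x I; rewrite withinET => nW [cW clW].
    move: nW; rewrite nbhsE => -[B [oB Bx] BW].
    exists (inl @` B), (~` (inl @` W)); split.
    * exact: inl_img_open.
    * apply/h_openE; rewrite setCK.
      have eW : inl @^-1` (inl @` W : set (plus_f f)) = W.
        apply/seteqP; split => z /=; last by exists z.
        by move=> [x' Kx' [<-]].
      split.
      - set S := (X in closed X); have -> : S = W by rewrite /S eW.
        exact: clW.
      - set S := (X in closed X); have -> : S = set0.
          by apply/seteqP; split => // z; rewrite /S /= => -[].
        exact: closed0.
      - set S := (X in f X); have -> : S = W by rewrite /S eW.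
        by rewrite hK.
    * by exists x.
    * by move=> [].
    * apply/seteqP; split => // z [[x' Bx' <-]]; apply.
      by exists x'; [exact: BW|].
  case: p q pq => [x|a] [x'|b] pq.
  + have xx : x != x' by apply: contra pq => /eqP ->.
    move: hX; rewrite open_hausdorff => /(_ x x' xx) [[U V] /= [xU x'V] [oU oV /eqP UV]].
    move: xU x'V; rewrite !inE => xU x'V.
    exists (inl @` U), (inl @` V); split.
    * exact: inl_img_open.
    * exact: inl_img_open.
    * by exists x.
    * by exists x'.
    * apply/seteqP; split => // z [[u Uu eu] [v Vv ev]]; subst z.
      case: ev => e; subst v.
      by have : (U `&` V) u by []; rewrite UV.
  + exact: mixed.
  + have [U [V [oU oV Ux Vy UV]]] := mixed x' a.
    by exists V, U; split => //; rewrite setIC.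
  + have ab : a <> b by move=> e; move: pq; rewrite e eqxx.
    have [A [B [cA cB AB nfA nfB]]] := hS a b ab.
    move: hY; rewrite open_hausdorff => /(_ a b (introN eqP ab)) [[UY VY] /= [aU bV] [oU oV /eqP UV]].
    move: aU bV; rewrite !inE => aU bV.
    exists (~` @glueset _ _ f B (f B `|` ~` UY)), (~` @glueset _ _ f A (f A `|` ~` VY)); split.
    * apply: (@closed_openC _ (@glueset _ _ f B (f B `|` ~` UY))).
      apply: glueset_closed;
        [done|by apply: closedU; [exact: fcl|exact: open_closedC]|by move=> y fy; left].
    * apply: (@closed_openC _ (@glueset _ _ f A (f A `|` ~` VY))).
      apply: glueset_closed;
        [done|by apply: closedU; [exact: fcl|exact: open_closedC]|by move=> y fy; left].
    * by move=> /= [].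
    * by move=> /= [].
    * apply/seteqP; split => // -[z|z] /= [h1 h2].
      - have : (A `|` B) z by rewrite AB.
        by case.
      - have [Uz|nUz] := pselect (UY z); last by apply: h1; right.
        have [Vz|nVz] := pselect (VY z); last by apply: h2; right.
        by have : (UY `&` VY) z by []; rewrite UV.
Qed.
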